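(* For every prime $p$, there are infinitely many positive integers $L$ such that there exists a multicast network that is vector linearly solvable over $\mathrm{GF}(p)^L$ but not scalar linearly solvable over $\mathrm{GF}(q')$ for any prime power $q'\le p^L$.
   Context: A multicast network is a finite directed acyclic multigraph with a unique source $s$ and a set of receivers; edges have unit capacity; $In(v)$, $Out(v)$ are incoming/outgoing edges of $v$; $\omega=|Out(s)|$ is the source dimension and every receiver has $\omega$ edge-disjoint paths from $s$. A vector linear code over $\mathrm{GF}(q)^L$ (dimension $L$ over $\mathrm{GF}(q)$) assigns to each pair $(d,e)$ of edges an $L\times L$ matrix $\mathbf{K}_{d,e}$ over $\mathrm{GF}(q)$, zero unless $d\in In(v)$, $e\in Out(v)$ for some $v$; global encoding kernels ($\omega L\times L$) satisfy $[\mathbf{F}_e]_{e\in Out(s)}=\mathbf{I}_{\omega L}$ and $\mathbf{F}_e=\sum_{d\in In(v)}\mathbf{F}_d\mathbf{K}_{d,e}$ for $e\in Out(v)$, $v\neq s$; it is a solution if $[\mathbf{F}_e]_{e\in In(t)}$ has rank $\omega L$ for every receiver $t$. A scalar linear solution over $\mathrm{GF}(Q)$ is a vector linear solution of dimension $1$ over $\mathrm{GF}(Q)$. *)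

(* Defs.v *)
From HB Require Import structures.
From mathcomp Require Import all_boot all_order all_algebra all_field.
Set Implicit Arguments. Unset Strict Implicit. Unset Printing Implicit Defensive.
Import GRing.Theory.
Local Open Scope ring_scope.

(* A multicast network: a finite directed multigraph with vertex type V and
   edge type E; edge e goes from [tl e] to [hd e]; source [s]; receivers [T]. *)
Section Network.
Variables (V E : finType) (tl hd : E -> V) (s : V) (T : {set V}).

Definition Out (v : V) : {set E} := [set e | tl e == v].
Definition In (v : V) : {set E} := [set e | hd e == v].

Definition omega : nat := #|Out s|.

Fixpoint is_path (x : V) (p : seq E) (y : V) : bool :=
  match p with
  | [::] => x == y
  | e :: p' => (tl e == x) && is_path (hd e) p' y
  end.

Definition acyclic : Prop := exists r : V -> nat, forall e, (r (tl e) < r (hd e))%N.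

Definition multicast_network : Prop :=
  [/\ acyclic,
      In s = set0 &
      forall t, t \in T ->
        exists P : 'I_omega -> seq E,
          (forall i, is_path s (P i) t) /\
          (forall i j, i != j -> forall e, e \in P i -> e \notin P j)].

(* The i-th block column (of width L) of the identity matrix I_{omega L}. *)
Definition unit_block (F : fieldType) (L : nat) (i : 'I_omega) : 'M[F]_(omega * L, L) :=
  \matrix_(r < omega * L, c < L) ((nat_of_ord r == i * L + c)%N)%:R.

(* The concatenation [F_e]_{e in In(t)}, written with zero columns for edges
   not in In(t) (which does not change the rank). Columns are indexed by the
   pairs (e, c) of E * 'I_L. *)
Definition in_kernels (F : fieldType) (L : nat) (G : E -> 'M[F]_(omega * L, L)) (t : V)
  : 'M[F]_(omega * L, #|{: E * 'I_L}|) :=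
  \matrix_(r < omega * L, j < #|{: E * 'I_L}|)
     (let ec := enum_val j in if hd ec.1 == t then G ec.1 r ec.2 else 0).

Definition vlin_solution (F : fieldType) (L : nat) (K : E -> E -> 'M[F]_L) : Prop :=
  (forall d e, hd d != tl e -> K d e = 0) /\
  exists (G : E -> 'M[F]_(omega * L, L)) (ord : E -> 'I_omega),
    [/\ {in Out s &, injective ord},
        (forall e, e \in Out s -> G e = unit_block F L (ord e)),
        (forall e, tl e != s -> G e = \sum_(d in In (tl e)) G d *m K d e) &
        (forall t, t \in T -> \rank (in_kernels G t) = (omega * L)%N)].

Definition vlin_solvable (F : fieldType) (L : nat) : Prop :=
  exists K : E -> E -> 'M[F]_L, vlin_solution K.

Definition slin_solvable (F : fieldType) : Prop := vlin_solvable F 1.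

End Network.

(* Main.v *)
Require Import Defs.
From HB Require Import structures.
From mathcomp Require Import all_boot all_order all_algebra all_field.
From mathcomp Require Import zify.
Set Implicit Arguments. Unset Strict Implicit. Unset Printing Implicit Defensive.
Import GRing.Theory.
Local Open Scope ring_scope.

Lemma low_rank_factor (F : fieldType) m n k (D : 'M[F]_(m, n)) :
  (\rank D <= k)%N -> exists (P : 'M[F]_(m, k)) (Q : 'M[F]_(k, n)), D = P *m Q.
Proof.
move=> hk.
exists (col_ebase D *m (pid_mx (\rank D) : 'M_(m, k))).
exists ((pid_mx (\rank D) : 'M_(k, n)) *m row_ebase D).
by rewrite -[LHS]mulmx_ebase !mulmxA -[_ *m pid_mx _ *m pid_mx _]mulmxA pid_mx_id.
Qed.

Lemma greedy_step (F : finFieldType) m n k N (c : 'I_N -> 'M[F]_(m, n)) :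
  (N * #|F| ^ (k.-1 * (m + n)) < #|F| ^ (m * n))%N ->
  exists A : 'M[F]_(m, n), forall i, (k <= \rank (A - c i)%R)%N.
Proof.
move=> hN.
have [/existsP [A /forallP hA]|] := boolP [exists A : 'M[F]_(m, n), [forall i, (k <= \rank (A - c i)%R)%N]].
  by exists A.
move=> /existsPn hall; exfalso.
pose g (x : 'I_N * ('M[F]_(m, k.-1) * 'M[F]_(k.-1, n))) := c x.1 + x.2.1 *m x.2.2.
have sub : [set: 'M[F]_(m, n)] \subset codom g.
  apply/subsetP => A _.
  have := hall A. move=> /forallPn [i].
  rewrite -ltnNge => hi.
  have hk : (\rank (A - c i)%R <= k.-1)%N by case: (k) hi.
  have [P [Q hPQ]] := low_rank_factor hk.
  apply/codomP; exists (i, (P, Q)); rewrite /g /= -hPQ.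
  by rewrite addrC subrK.
have := subset_leq_card sub.
rewrite cardsT card_mx => H.
have := leq_trans H (card_size _).
rewrite size_codom !card_prod !card_mx card_ord -expnD.
have -> : (m * k.-1 + k.-1 * n = k.-1 * (m + n))%N by lia.
by rewrite leqNgt hN.
Qed.

Lemma greedy_code (F : finFieldType) m n k N :
  (N.-1 * #|F| ^ (k.-1 * (m + n)) < #|F| ^ (m * n))%N ->
  exists c : 'I_N -> 'M[F]_(m, n), forall i j, i != j -> (k <= \rank (c i - c j)%R)%N.
Proof.
elim: N => [|N IH] hN.
  by exists (fun i => 0) => [[]].
have hN' : (N.-1 * #|F| ^ (k.-1 * (m + n)) < #|F| ^ (m * n))%N.
  by apply: leq_ltn_trans hN; rewrite leq_mul2r leq_pred orbT.
have [c hc] := IH hN'.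
have [A hA] := greedy_step c hN.
exists (fun i => if unlift ord_max i is Some j then c j else A) => i j.
case: unliftP => [i' ->|->]; case: unliftP => [j' ->|->] //.
- by move=> hij; apply: hc; apply: contraNneq hij => ->.
- by move=> _; rewrite -mxrank_opp opprB.
- by rewrite eqxx.
Qed.

Lemma rank_pair (F : fieldType) k m (A B : 'M[F]_(k, m)) :
  (k + \rank (B - A)%R <= \rank (col_mx (row_mx 1%:M A) (row_mx 1%:M B)))%N.
Proof.
set Z := col_mx _ _.
have e1 : (block_mx 1%:M 0 (-1%:M) 1%:M : 'M[F]_(k + k)) *m Z = block_mx 1%:M A 0 (B - A).
  rewrite /Z mul_block_col !mul1mx !mul0mx addr0 block_mxEv; congr col_mx.
  by rewrite mulNmx mul1mx opp_row_mx add_row_mx addNr addrC.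
have e2 : block_mx 1%:M A 0 (B - A) *m block_mx 1%:M (- A) 0 1%:M = block_mx 1%:M 0 0 (B - A).
  by rewrite mulmx_block !mulmx1 !mul1mx !mulmx0 !mul0mx !addr0 add0r addNr.
have := mxrankM_maxl (block_mx 1%:M A 0 (B - A)) (block_mx 1%:M (- A) 0 1%:M).
rewrite e2 rank_diag_block_mx mxrank1 -e1 => h.
exact: leq_trans h (mxrankM_maxr _ _).
Qed.

Lemma complete_rows (F : fieldType) a b n (X : 'M[F]_(a, n)) :
  (n <= \rank X + b)%N -> exists Y : 'M[F]_(b, n), (1%:M <= col_mx X Y)%MS.
Proof.
move=> hn.
set C := (X^C)%MS.
have hC : (\rank C <= b)%N by rewrite mxrank_compl; lia.
pose Y : 'M[F]_(b, n) := \matrix_(i < b)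
   (if (insub (val i) : option 'I_(\rank C)) is Some j then row j (row_base C) else 0).
exists Y.
have sCY : (C <= Y)%MS.
  rewrite -(eq_row_base C); apply/row_subP => j.
  have hj : (j < b)%N by apply: leq_trans (ltn_ord j) hC.
  have -> : row j (row_base C) = row (Ordinal hj) Y.
    by rewrite rowK /= valK.
  exact: row_sub.
rewrite -addsmxE.
apply: submx_trans (addsmxS (submx_refl X) sCY).
by rewrite sub1mx addsmx_compl_full.
Qed.
Lemma bidx_proof w L (i : 'I_w) (a : 'I_L) : (i * L + a < w * L)%N.
Proof.
have := ltn_ord i; have := ltn_ord a => ha hi.
have : (i.+1 * L <= w * L)%N by rewrite leq_mul2r hi orbT.
rewrite mulSn; lia.
Qed.
Definition bidx w L (i : 'I_w) (a : 'I_L) : 'I_(w * L) := Ordinal (bidx_proof i a).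

Definition blk (F : fieldType) w L (i : 'I_w) (M : 'M[F]_(w * L, L)) : 'M[F]_L :=
  \matrix_(a, c) M (bidx i a) c.

Lemma bidx_eq w L (i : 'I_w) (a : 'I_L) (r : nat) :
  (r == i * L + a)%N = ((r %/ L)%N == i) && ((r %% L)%N == a).
Proof.
have ha := ltn_ord a.
apply/eqP/andP => [->|[/eqP h1 /eqP h2]].
  by rewrite divnMDl ?modnMDl ?divn_small ?modn_small ?addn0; lia.
by rewrite (divn_eq r L) h1 h2.
Qed.

Section HubLemma.
Variables (V E : finType) (tl hd : E -> V) (s : V) (x0 : E) (hx0 : x0 \in Out tl s).
Variables (F : fieldType) (L : nat).

Definition ordS (e : E) : 'I_(omega tl s) := enum_rank_in hx0 e.

Lemma hub_sum (M : 'M[F]_(omega tl s * L, L)) :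
  \sum_(d in Out tl s) unit_block F L (ordS d) *m blk (ordS d) M = M.
Proof.
apply/matrixP => r c.
rewrite summxE.
have hr := ltn_ord r.
have hL : (0 < L)%N by move: (leq_ltn_trans (leq0n _) hr); rewrite muln_gt0 => /andP[].
have hi0 : (r %/ L < omega tl s)%N by rewrite ltn_divLR.
have hk0 : (r %% L < L)%N by rewrite ltn_mod.
pose i0 : 'I_(omega tl s) := Ordinal hi0.
pose k0 : 'I_L := Ordinal hk0.
have hv : enum_val i0 \in Out tl s.
  by have := enum_valP i0.
rewrite (bigD1 (enum_val i0)) //= big1 ?addr0 => [|d /andP [hdO hne]].
  rewrite !mxE (bigD1 k0) //= big1 ?addr0 => [|k hk].
    rewrite !mxE /ordS enum_valK_in /= -divn_eq eqxx mul1r.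
    by congr (M _ c); apply: val_inj => /=; rewrite -divn_eq.
  rewrite !mxE /ordS enum_valK_in bidx_eq /= eqxx /=.
  suff -> : ((r %% L)%N == k) = false by rewrite mul0r.
  by apply/eqP => h; move/eqP: hk; apply; apply: val_inj; rewrite /= h.
rewrite !mxE big1 // => k _; rewrite !mxE bidx_eq.
case: eqP => [h|]; last by rewrite mul0r.
exfalso; move/negP: hne; apply.
apply/eqP; rewrite -(enum_rankK_in hx0 hdO); congr enum_val.
by apply: val_inj => /=; rewrite -h.
Qed.
End HubLemma.
Section Net.
Variable r : nat.
Definition NV : finType := option (option ('I_r + 'I_r * 'I_r)).
Definition NE : finType :=
  ('I_5 + ('I_r * 'I_2 + ('I_r * 'I_r * 'I_2 * bool + 'I_r * 'I_r * 'I_2)))%type.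

Definition vs : NV := None.
Definition vh : NV := Some None.
Definition vm i : NV := Some (Some (inl i)).
Definition vt x y : NV := Some (Some (inr (x, y))).

Definition esrc k : NE := inl k.
Definition ehm i a : NE := inr (inl (i, a)).
Definition emt x y a b : NE := inr (inr (inl (x, y, a, b))).
Definition eht x y a : NE := inr (inr (inr (x, y, a))).

Definition ntl (e : NE) : NV :=
  match e with
  | inl _ => vs
  | inr (inl _) => vh
  | inr (inr (inl (x, y, a, b))) => vm (if b then y else x)
  | inr (inr (inr _)) => vh
  end.
Definition nhd (e : NE) : NV :=
  match e with
  | inl _ => vh
  | inr (inl (i, a)) => vm i
  | inr (inr (inl (x, y, a, b))) => vt x y
  | inr (inr (inr (x, y, a))) => vt x y
  end.
Definition NT : {set NV} :=
  [set v | if v is Some (Some (inr (x, y))) then x != y else false].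

Lemma Out_s : Out ntl vs = [set esrc k | k : 'I_5].
Proof.
apply/setP => e; rewrite inE.
case: e => [k|[[i a]|[[[[x y] a] b]|[[x y] a]]]] /=.
- by rewrite eqxx; apply/esym/imsetP; exists k.
- by apply/esym/imsetP => -[k _].
- by apply/esym/imsetP => -[k _].
- by apply/esym/imsetP => -[k _].
Qed.

Lemma omega5 : omega ntl vs = 5%N.
Proof.
by rewrite /omega Out_s card_imset ?card_ord // => k1 k2 [].
Qed.

Lemma In_h : In nhd vh = Out ntl vs.
Proof.
apply/setP => e; rewrite !inE.
by case: e => [k|[[i a]|[[[[x y] a] b]|[[x y] a]]]].
Qed.

Lemma In_m i d : d \in In nhd (vm i) -> exists a, d = ehm i a.
Proof.
rewrite inE.
case: d => [k|[[j a]|[[[[x y] a] b]|[[x y] a]]]] //=.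
by move=> /eqP [->]; exists a.
Qed.

Lemma In_t x y d : d \in In nhd (vt x y) ->
  (exists a b, d = emt x y a b) \/ (exists a, d = eht x y a).
Proof.
rewrite inE.
case: d => [k|[[j a]|[[[[x' y'] a] b]|[[x' y'] a]]]] //= /eqP [-> ->].
- by left; exists a, b.
- by right; exists a.
Qed.

Definition a0 : 'I_2 := ord0.
Definition a1 : 'I_2 := Ordinal (isT : (1 < 2)%N).
Definition k_ (j : nat) (h : (j < 5)%N) : 'I_5 := Ordinal h.

Definition npath x y (k : nat) : seq NE :=
  match k with
  | 0 => [:: esrc (@k_ 0 isT); ehm x a0; emt x y a0 false]
  | 1 => [:: esrc (@k_ 1 isT); ehm x a1; emt x y a1 false]
  | 2 => [:: esrc (@k_ 2 isT); ehm y a0; emt x y a0 true]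
  | 3 => [:: esrc (@k_ 3 isT); ehm y a1; emt x y a1 true]
  | _ => [:: esrc (@k_ 4 isT); eht x y a0]
  end.

Lemma ehm_eq i j a b : (ehm i a == ehm j b) = (i == j) && (a == b).
Proof. by []. Qed.
Lemma emt_eq x y x' y' a a' b b' :
  (emt x y a b == emt x' y' a' b') = [&& x == x', y == y', a == a' & b == b'].
Proof. by apply/eqP/and4P => [[-> -> -> ->]|[/eqP-> /eqP-> /eqP-> /eqP->]]. Qed.
Lemma eht_eq x y x' y' a a' : (eht x y a == eht x' y' a') = [&& x == x', y == y' & a == a'].
Proof. by apply/eqP/and3P => [[-> -> ->]|[/eqP-> /eqP-> /eqP->]]. Qed.
Lemma hm_src i a k : (ehm i a == esrc k) = false. Proof. by []. Qed.
Lemma mt_src x y a b k : (emt x y a b == esrc k) = false. Proof. by []. Qed.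
Lemma ht_src x y a k : (eht x y a == esrc k) = false. Proof. by []. Qed.
Lemma mt_hm x y a b i c : (emt x y a b == ehm i c) = false. Proof. by []. Qed.
Lemma ht_hm x y a i c : (eht x y a == ehm i c) = false. Proof. by []. Qed.
Lemma hm_mt x y a b i c : (ehm i c == emt x y a b) = false. Proof. by []. Qed.
Lemma hm_ht x y a i c : (ehm i c == eht x y a) = false. Proof. by []. Qed.
Lemma mt_ht x y a b x' y' c : (emt x y a b == eht x' y' c) = false. Proof. by []. Qed.
Lemma ht_mt x y a b x' y' c : (eht x' y' c == emt x y a b) = false. Proof. by []. Qed.
Lemma src_hm i a k : (esrc k == ehm i a) = false. Proof. by []. Qed.
Lemma src_mt x y a b k : (esrc k == emt x y a b) = false. Proof. by []. Qed.
Lemma src_ht x y a k : (esrc k == eht x y a) = false. Proof. by []. Qed.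
Lemma src_eq k k' : (esrc k == esrc k') = (k == k'). Proof. by []. Qed.
Lemma a01 : (a0 == a1) = false. Proof. by []. Qed.
Lemma a10 : (a1 == a0) = false. Proof. by []. Qed.

Lemma disj_of_all (s1 s2 : seq NE) :
  all (fun z => z \notin s2) s1 -> forall e, e \in s1 -> e \notin s2.
Proof. by move/allP => h e /h. Qed.

Lemma npath_disj x y (i j : nat) e : x != y -> (i < 5)%N -> (j < 5)%N -> i != j ->
  e \in npath x y i -> e \notin npath x y j.
Proof.
move=> hxy hi5 hj5 hij'.
have hyx : (y == x) = false by apply/negbTE; rewrite eq_sym.
have hxy2 : (x == y) = false by apply/negbTE.
move: hij'; case: i hi5 => [|[|[|[|[|i]]]]] _ //; case: j hj5 => [|[|[|[|[|j]]]]] _ // _.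
all: move=> H; rewrite /npath !inE in H.
17-20: case/orP: H => /eqP ->.
1-16: case/or3P: H => /eqP ->.
all: rewrite /npath !inE.
all: rewrite ?ehm_eq ?emt_eq ?eht_eq ?hm_src ?mt_src ?ht_src ?mt_hm ?ht_hm ?hm_mt ?hm_ht ?mt_ht ?ht_mt.
all: rewrite ?ehm_eq ?emt_eq ?eht_eq ?src_hm ?src_mt ?src_ht ?src_eq.
all: by rewrite ?a01 ?a10 ?hxy2 ?hyx ?eqxx ?andbF ?andFb.
Qed.
Lemma net_multicast : multicast_network ntl nhd vs NT.
Proof.
split.
- exists (fun v : NV => match v with None => 0%N | Some None => 1%N
                       | Some (Some (inl _)) => 2%N | _ => 3%N end).
  by case=> [k|[[i a]|[[[[x y] a] b]|[[x y] a]]]] //=; case: b.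
- apply/setP => e; rewrite !inE.
  by case: e => [k|[[i a]|[[[[x y] a] b]|[[x y] a]]]].
- move=> t; rewrite inE.
  case: t => [[[//|[x y]]|//]|//] hxy.
  exists (fun k => npath x y k); split.
    move=> k; have := leq_trans (ltn_ord k) (eq_leq omega5).
    by case: k => [[|[|[|[|[|k]]]]] /=] _ _; rewrite /= ?eqxx.
  move=> i j; have := leq_trans (ltn_ord i) (eq_leq omega5).
  have := leq_trans (ltn_ord j) (eq_leq omega5).
  case: i j => [i hi] [j hj] /= hj5 hi5 hij e.
  exact: npath_disj.
Qed.
Lemma ord2_cases (a : 'I_2) : a = a0 \/ a = a1.
Proof. by case: a => [[|[|//]] h]; [left|right]; apply: val_inj. Qed.

Lemma sub_col_l (F : fieldType) m1 m2 n (A : 'M[F]_(m1, n)) (B : 'M[F]_(m2, n)) :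
  (A <= col_mx A B)%MS.
Proof. by rewrite -addsmxE addsmxSl. Qed.
Lemma sub_col_r (F : fieldType) m1 m2 n (A : 'M[F]_(m1, n)) (B : 'M[F]_(m2, n)) :
  (B <= col_mx A B)%MS.
Proof. by rewrite -addsmxE addsmxSr. Qed.

Lemma row_in_kernels (F : fieldType) L (G : NE -> 'M[F]_(omega ntl vs * L, L)) t k :
  row k (in_kernels nhd G t)^T =
  let ec := enum_val k in if nhd ec.1 == t then (col ec.2 (G ec.1))^T else 0.
Proof.
apply/rowP => c; rewrite !mxE /=.
by case: ifP => _; rewrite !mxE.
Qed.

Lemma net_not_scalar (K : finFieldType) : (#|K| ^ 10 < r)%N -> ~ slin_solvable ntl nhd vs NT K.
Proof.
move=> hr [Kc [_ [G [ord [_ hsrc hrec hrank]]]]].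
pose f i := (G (ehm i a0), G (ehm i a1)).
have [/injectiveP inj|/injectivePn [i [j hij hfij]]] := boolP (injectiveb f).
  have := leq_card f inj.
  rewrite card_prod !card_mx card_ord omega5 -expnD.
  by rewrite leqNgt hr.
have ht : vt i j \in NT by rewrite inE.
have := hrank _ ht.
pose Z := col_mx (col_mx (G (ehm i a0))^T (G (ehm i a1))^T)
                 (col_mx (G (eht i j a0))^T (G (eht i j a1))^T).
have hm : forall z a, z = i \/ z = j -> ((G (ehm z a))^T <= Z)%MS.
  move=> z a hz.
  have -> : G (ehm z a) = G (ehm i a).
    case: hz => ->  //; case: (ord2_cases a) => ->; by case: hfij.
  case: (ord2_cases a) => ->.
    exact: submx_trans (sub_col_l _ _) (sub_col_l _ _).
  exact: submx_trans (sub_col_r _ _) (sub_col_l _ _).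
have sub : ((in_kernels nhd G (vt i j))^T <= Z)%MS.
  apply/row_subP => k; rewrite row_in_kernels /=.
  case: eqP => [hk|_]; last by rewrite sub0mx.
  apply: submx_trans (_ : ((G (enum_val k).1)^T <= Z)%MS).
    by rewrite tr_col row_sub.
  have : (enum_val k).1 \in In nhd (vt i j) by rewrite inE hk.
  move: (enum_val k).1 => e.
  case/In_t => [[a [b ->]]|[a ->]]; last first.
    case: (ord2_cases a) => ->.
      exact: submx_trans (sub_col_l _ _) (sub_col_r _ _).
    exact: submx_trans (sub_col_r _ _) (sub_col_r _ _).
  rewrite hrec /=; last by [].
  rewrite raddf_sum /=; apply: summx_sub => d hd.
  rewrite trmx_mul; apply: submx_trans (submxMl _ _) _.
  have [a' ->] := In_m hd.
  by apply: hm; case: b {hd}; [right|left].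
have := mxrankS sub; rewrite mxrank_tr => h1 h2.
have := leq_trans h1 (rank_leq_row Z).
by rewrite h2 omega5.
Qed.

Lemma arith1 (L b R : nat) : (L + L + b <= R -> L <= b -> L + L + 3 * L <= R + (L + L))%N.
Proof. lia. Qed.

Section Vector.
Variables (F : finFieldType) (L : nat) (A : 'I_r -> 'M[F]_(L + L, 3 * L)).
Hypothesis hA : forall i j, i != j -> (L <= \rank (A i - A j)%R)%N.

Lemma Hn : ((L + L) + 3 * L = omega ntl vs * L)%N.
Proof. rewrite omega5; lia. Qed.

Definition X i : 'M[F]_(L + L, omega ntl vs * L) := castmx (erefl, Hn) (row_mx 1%:M (A i)).

Lemma cast_rank k n0 n (e : n0 = n) (P Q : 'M[F]_(k, n0)) :
  \rank (col_mx (castmx (erefl, e) P) (castmx (erefl, e) Q)) = \rank (col_mx P Q).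
Proof. by case: n / e; rewrite !castmx_id. Qed.

Lemma rank_X i j : i != j -> (omega ntl vs * L <= \rank (col_mx (X i) (X j)) + (L + L))%N.
Proof.
move=> hij; rewrite /X cast_rank -Hn.
have h1 := rank_pair (A i) (A j).
have h2 : (L <= \rank (A j - A i)%R)%N by apply: hA; rewrite eq_sym.
exact: (arith1 h1 h2).
Qed.

Definition Ypick x y : 'M[F]_(L + L, omega ntl vs * L) :=
  odflt 0 [pick Y | (1%:M <= col_mx (col_mx (X x) (X y)) Y)%MS].

Lemma Ypick_ok x y : x != y -> (1%:M <= col_mx (col_mx (X x) (X y)) (Ypick x y))%MS.
Proof.
move=> hxy; rewrite /Ypick; case: pickP => [Y //|none].
have [Y hY] := complete_rows (rank_X hxy).
by move: (none Y); rewrite hY.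
Qed.

Definition blkT (M : 'M[F]_(L + L, omega ntl vs * L)) (a : 'I_2) : 'M[F]_(omega ntl vs * L, L) :=
  (if a == a0 then usubmx M else dsubmx M)^T.

Lemma hx0 : esrc ord0 \in Out ntl vs.
Proof. by rewrite inE. Qed.

Definition ordE := ordS hx0.

Definition Gv (e : NE) : 'M[F]_(omega ntl vs * L, L) :=
  match e with
  | inl _ => unit_block F L (ordE e)
  | inr (inl (i, a)) => blkT (X i) a
  | inr (inr (inl (x, y, a, b))) => blkT (X (if b then y else x)) a
  | inr (inr (inr (x, y, a))) => blkT (Ypick x y) a
  end.

Definition Kv (d e : NE) : 'M[F]_L :=
  match e with
  | inl _ => 0
  | inr (inr (inl (x, y, a, b))) => if d == ehm (if b then y else x) a then 1%:M else 0
  | _ => if d is inl _ then blk (ordE d) (Gv e) else 0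
  end.

Lemma Gv_sub t e : nhd e = t -> ((Gv e)^T <= (in_kernels nhd Gv t)^T)%MS.
Proof.
move=> he; apply/row_subP => c.
have := row_sub (enum_rank (e, c)) (in_kernels nhd Gv t)^T.
by rewrite row_in_kernels /= enum_rankK /= he eqxx tr_col.
Qed.

Lemma hub_case e : ntl e = vh ->
  Gv e = \sum_(d in In nhd (ntl e)) Gv d *m Kv d e.
Proof.
move=> he; rewrite he In_h.
rewrite -[LHS](hub_sum hx0); apply: eq_bigr => d.
rewrite inE; case: d => [k|[[? ?]|[[[[? ?] ?] ?]|[[? ?] ?]]]] //= _.
case: e he => [k'|[[i a]|[[[[x y] a] b]|[[x y] a]]]] //= _.
Qed.

Lemma net_vector : vlin_solvable ntl nhd vs NT F L.
Proof.
exists Kv; split.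
  move=> d e; case: e => [k|[[i a]|[[[[x y] a] b]|[[x y] a]]]] //=.
  - by case: d => //= k; rewrite eqxx.
  - have [->|hne] := eqVneq d (ehm (if b then y else x) a); first by rewrite /= eqxx.
    by [].

  - by case: d => //= k; rewrite eqxx.
exists Gv, ordE; split.
- exact: enum_rank_in_inj.
- by case=> [k|[[i a]|[[[[x y] a] b]|[[x y] a]]]] //=; rewrite inE.
- case=> [k|[[i a]|[[[[x y] a] b]|[[x y] a]]]] //= _.
  + exact: (hub_case (e := ehm i a)).
  + set z := if b then y else x.
    have hin : ehm z a \in In nhd (vm z) by rewrite inE.
    rewrite (bigD1 (ehm z a)) //= eqxx mulmx1 big1 ?addr0 // => d /andP [_ hd].
    by rewrite (negbTE hd) mulmx0.
  + exact: (hub_case (e := eht x y a)).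
- move=> t; rewrite inE.
  case: t => [[[//|[x y]]|//]|//] hxy.
  apply/eqP; rewrite eqn_leq rank_leq_row /= -mxrank_tr.
  rewrite -[X in (X <= _)%N](mxrank1 F) mxrankS //.
  apply: submx_trans (Ypick_ok hxy) _.
  have hX : forall z b, z = (if b then y else x) -> (X z <= (in_kernels nhd Gv (vt x y))^T)%MS.
    move=> z b ->; rewrite -[X _]vsubmxK col_mx_sub.
    apply/andP; split.
      have := Gv_sub (e := emt x y a0 b) (erefl _); by rewrite /= /blkT eqxx trmxK.
    by have := Gv_sub (e := emt x y a1 b) (erefl _); rewrite /= /blkT trmxK.
  rewrite !col_mx_sub (hX x false) // (hX y true) //=.
  rewrite -[Ypick _ _]vsubmxK col_mx_sub.
  apply/andP; split.
    by have := Gv_sub (e := eht x y a0) (erefl _); rewrite /= /blkT eqxx trmxK.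
  by have := Gv_sub (e := eht x y a1) (erefl _); rewrite /= /blkT trmxK.
Qed.
End Vector.
End Net.

Lemma arith_main (p n : nat) : (1 < p)%N ->
  ((p ^ (10 * (n + 6)) + 1).-1 * p ^ ((n + 6).-1 * ((n + 6) + (n + 6) + 3 * (n + 6)))
     < p ^ (((n + 6) + (n + 6)) * (3 * (n + 6))))%N.
Proof.
move=> hp.
rewrite addn1 /= -expnD ltn_exp2l //.
have -> : (n + 6).-1 = (n + 5)%N by rewrite addnS.
nia.
Qed.

Local Close Scope ring_scope.

Theorem corollary11 (p : nat) (p_prime : prime p) :
  forall n : nat, exists L : nat, (n < L)%N /\
    exists (V E : finType) (tl hd : E -> V) (s : V) (T : {set V}),
      [/\ multicast_network tl hd s T,
          vlin_solvable tl hd s T 'F_p L &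
          forall F : finFieldType, (#|F| <= p ^ L)%N -> ~ slin_solvable tl hd s T F].
Proof.
move=> n.
have hp : (1 < p)%N by apply: prime_gt1.
set L := (n + 6)%N.
set r := (p ^ (10 * L) + 1)%N.
exists L; split; first by rewrite /L; lia.
exists (NV r), (NE r), (@ntl r), (@nhd r), (@vs r), (@NT r).
split.
- exact: net_multicast.
- have h : (r.-1 * #|'F_p| ^ (L.-1 * (L + L + 3 * L)) < #|'F_p| ^ ((L + L) * (3 * L)))%N.
    by rewrite (card_Fp p_prime); exact: arith_main.
  have [A hA] := greedy_code h.
  exact: (net_vector hA).
- move=> K hK; apply: net_not_scalar.
  apply: (@leq_ltn_trans (p ^ (10 * L))).
    by rewrite mulnC expnM leq_exp2r.
  by rewrite /r addn1.
Qed.
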